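(* Let $\mathcal R$ be a nonzero commutative ring. Then $\mathcal R[[Y]]^{W^v}=\mathcal R[Y]^{W^v}$ (i.e. every $W^v$-invariant element of the Looijenga algebra has finite support) if and only if $W^v$ is finite.
   Context: $I$ finite, $A$ a generalized Cartan matrix; $X,Y$ dual free $\mathbb Z$-modules of finite rank with free families $(\alpha_i)\subset X$, $(\alpha_i^\vee)\subset Y$, $\alpha_j(\alpha_i^\vee)=a_{i,j}$; $\mathbb A=Y\otimes\mathbb R$; $r_i(v)=v-\alpha_i(v)\alpha_i^\vee$; $W^v=\langle r_i\rangle$; $Q^\vee_+=\bigoplus\mathbb N\alpha_i^\vee$, $x\le_{Q^\vee}y$ iff $y-x\in Q^\vee_+$. A set $E\subset Y$ is almost finite if there is a finite $J\subset Y$ with every element of $E$ $\le_{Q^\vee}$ some element of $J$. $\mathcal R[[Y]]$ is the set of formal series $\sum_{\lambda\in Y}a_\lambda e^\lambda$ with almost finite support ($e^\lambda e^\mu=e^{\lambda+\mu}$), $\mathcal R[Y]$ its subalgebra of finitely supported elements, and the superscript $W^v$ denotes elements with $a_{w(\lambda)}=a_\lambda$ for all $w\in W^v$. *)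

(* Defs.v *)
From HB Require Import structures.
From mathcomp Require Import all_boot all_order all_algebra.
Set Implicit Arguments. Unset Strict Implicit. Unset Printing Implicit Defensive.
Import Order.TTheory GRing.Theory Num.Theory.
Local Open Scope ring_scope.

(* Y = Z^m (row vectors), X = its dual, identified with Z^m via the pairing. *)
Definition pair (m : nat) (x y : 'rV[int]_m) : int := \sum_(k < m) x 0 k * y 0 k.

Definition free_family (n m : nat) (v : 'I_n -> 'rV[int]_m) : Prop :=
  forall c : 'I_n -> int, \sum_(i < n) c i *: v i = 0 -> forall i, c i = 0.

Definition is_GCM (n : nat) (A : 'M[int]_n) : Prop :=
  [/\ forall i, A i i = 2,
      forall i j, i != j -> A i j <= 0 &
      forall i j, A i j = 0 <-> A j i = 0].

Definition refl (n m : nat) (alpha alphav : 'I_n -> 'rV[int]_m) (i : 'I_n)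
  (v : 'rV[int]_m) : 'rV[int]_m := v - pair (alpha i) v *: alphav i.

Definition wact (n m : nat) (alpha alphav : 'I_n -> 'rV[int]_m) (s : seq 'I_n)
  (v : 'rV[int]_m) : 'rV[int]_m := foldr (refl alpha alphav) v s.

(* W^v = <r_i> is finite (as a group of automorphisms of Y): finitely many
   distinct maps are realized by words in the generators (the r_i are
   involutions, so words in the generators exhaust the generated group). *)
Definition Wv_finite (n m : nat) (alpha alphav : 'I_n -> 'rV[int]_m) : Prop :=
  exists L : seq (seq 'I_n), forall s : seq 'I_n,
    exists2 t, t \in L & forall v, wact alpha alphav s v = wact alpha alphav t v.

Definition leQ (n m : nat) (alphav : 'I_n -> 'rV[int]_m) (x y : 'rV[int]_m) : Prop :=
  exists c : 'I_n -> nat, y - x = \sum_(i < n) (c i)%:Z *: alphav i.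

(* support of a formal series a = sum a_lambda e^lambda is almost finite *)
Definition almost_finite_supp (R : nzRingType) (n m : nat)
  (alphav : 'I_n -> 'rV[int]_m) (a : 'rV[int]_m -> R) : Prop :=
  exists J : seq 'rV[int]_m, forall lam, a lam != 0 ->
    exists2 mu, mu \in J & leQ alphav lam mu.

Definition finite_supp (R : nzRingType) (m : nat) (a : 'rV[int]_m -> R) : Prop :=
  exists S : seq 'rV[int]_m, forall lam, a lam != 0 -> lam \in S.

Definition Wv_invariant (R : nzRingType) (n m : nat)
  (alpha alphav : 'I_n -> 'rV[int]_m) (a : 'rV[int]_m -> R) : Prop :=
  forall (s : seq 'I_n) lam, a (wact alpha alphav s lam) = a lam.

(* Main.v *)
Require Import Defs.
From HB Require Import structures.
From mathcomp Require Import all_boot all_order all_algebra.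
From mathcomp Require Import zify ring lra.
From Stdlib Require Import ClassicalEpsilon.
Set Implicit Arguments. Unset Strict Implicit. Unset Printing Implicit Defensive.
Import Order.TTheory GRing.Theory Num.Theory.
Local Open Scope ring_scope.


Lemma pairD m (x y z : 'rV[int]_m) : pair x (y + z) = pair x y + pair x z.
Proof. by rewrite /pair -big_split /=; apply: eq_bigr => k _; rewrite mxE mulrDr. Qed.
Lemma pairZ m (x y : 'rV[int]_m) c : pair x (c *: y) = c * pair x y.
Proof. by rewrite /pair mulr_sumr; apply: eq_bigr => k _; rewrite mxE mulrCA. Qed.
Lemma pair0 m (x : 'rV[int]_m) : pair x 0 = 0.
Proof. by rewrite /pair big1 // => k _; rewrite mxE mulr0. Qed.
Lemma pairN m (x y : 'rV[int]_m) : pair x (- y) = - pair x y.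
Proof. by rewrite -scaleN1r pairZ mulN1r. Qed.
Lemma pairB m (x y z : 'rV[int]_m) : pair x (y - z) = pair x y - pair x z.
Proof. by rewrite pairD pairN. Qed.
Lemma pair_sum m (x : 'rV[int]_m) I (r : seq I) P (F : I -> 'rV[int]_m) :
  pair x (\sum_(i <- r | P i) F i) = \sum_(i <- r | P i) pair x (F i).
Proof.
elim/big_rec2: _ => [|i y1 y2 _ <-]; first exact: pair0.
by rewrite pairD.
Qed.


Definition pb (P : Prop) : bool := if excluded_middle_informative P then true else false.
Lemma pbP P : reflect P (pb P).
Proof. by rewrite /pb; case: excluded_middle_informative => h; constructor. Qed.

Section Basics.
Variables (n m : nat) (alpha alphav : 'I_n -> 'rV[int]_m).
Hypothesis h2 : forall i, pair (alpha i) (alphav i) = 2.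

Local Notation act := (wact alpha alphav).

Lemma act_cat s t v : act (s ++ t) v = act s (act t v).
Proof. by rewrite /wact foldr_cat. Qed.
Lemma act_cons i s v : act (i :: s) v = refl alpha alphav i (act s v).
Proof. by []. Qed.
Lemma act_rcons s i v : act (rcons s i) v = act s (refl alpha alphav i v).
Proof. by rewrite -cats1 act_cat. Qed.
Lemma act_nil v : act [::] v = v. Proof. by []. Qed.

Lemma reflD i x y : refl alpha alphav i (x + y) = refl alpha alphav i x + refl alpha alphav i y.
Proof. rewrite /refl pairD scalerDl; rewrite addrACA opprD //. Qed.
Lemma reflZ i c x : refl alpha alphav i (c *: x) = c *: refl alpha alphav i x.
Proof. by rewrite /refl pairZ scalerBr scalerA. Qed.
Lemma refl0 i : refl alpha alphav i 0 = 0.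
Proof. by rewrite /refl pair0 scale0r subr0. Qed.
Lemma reflN i x : refl alpha alphav i (- x) = - refl alpha alphav i x.
Proof. by rewrite -!scaleN1r reflZ. Qed.

Lemma actD s x y : act s (x + y) = act s x + act s y.
Proof. by elim: s => //= i s IH; rewrite IH reflD. Qed.
Lemma actZ s c x : act s (c *: x) = c *: act s x.
Proof. by elim: s => //= i s IH; rewrite IH reflZ. Qed.
Lemma act0 s : act s 0 = 0.
Proof. by elim: s => //= i s IH; rewrite IH refl0. Qed.
Lemma actN s x : act s (- x) = - act s x.
Proof. by rewrite -!scaleN1r actZ. Qed.
Lemma actB s x y : act s (x - y) = act s x - act s y.
Proof. by rewrite actD actN. Qed.
Lemma act_sum s I (r : seq I) P (F : I -> 'rV[int]_m) :
  act s (\sum_(i <- r | P i) F i) = \sum_(i <- r | P i) act s (F i).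
Proof.
elim/big_rec2: _ => [|i y1 y2 _ <-]; first exact: act0.
by rewrite actD.
Qed.

Lemma pair_refl i v : pair (alpha i) (refl alpha alphav i v) = - pair (alpha i) v.
Proof.
rewrite /refl pairB pairZ h2.
by rewrite mulr2n mulrDr mulr1 opprD addrA subrr add0r.
Qed.
Lemma refl_invol i v : refl alpha alphav i (refl alpha alphav i v) = v.
Proof.
rewrite {1}/refl pair_refl scaleNr opprK /refl.
by rewrite subrK.
Qed.
Lemma refl_alphav i : refl alpha alphav i (alphav i) = - alphav i.
Proof.
rewrite /refl h2.
have -> : (2 : int) *: alphav i = alphav i + alphav i by rewrite scaler_nat mulr2n.
by rewrite opprD addrA subrr add0r.
Qed.

Lemma act_rev s v : act (rev s) (act s v) = v.
Proof.
elim: s v => //= i s IH v.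
by rewrite rev_cons act_rcons refl_invol IH.
Qed.
Lemma act_rev' s v : act s (act (rev s) v) = v.
Proof. by rewrite -{1}(revK s) act_rev. Qed.

Definition eqw (s t : seq 'I_n) := forall v, act s v = act t v.

Lemma len_ex s : exists k, pb (exists t, eqw t s /\ size t = k).
Proof. by exists (size s); apply/pbP; exists s. Qed.
Definition len s := ex_minn (len_ex s).
Lemma len_spec s : exists2 t, eqw t s & size t = len s.
Proof.
rewrite /len; case: ex_minnP => k /pbP [t [h1 h2']] _.
by exists t.
Qed.
Lemma len_min s t : eqw t s -> (len s <= size t)%N.
Proof.
rewrite /len; case: ex_minnP => k _ hmin ht.
by apply: hmin; apply/pbP; exists t.
Qed.
Lemma len_eqw s s' : eqw s s' -> len s = len s'.
Proof.
move=> e; apply/eqP; rewrite eqn_leq.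
case: (len_spec s) => t et ht; case: (len_spec s') => t' et' ht'.
apply/andP; split.
  by rewrite -ht'; apply: len_min => v; rewrite et' e.
by rewrite -ht; apply: len_min => v; rewrite et e.
Qed.
Lemma len_size s : (len s <= size s)%N.
Proof. exact: len_min. Qed.

Definition Qp (v : 'rV[int]_m) := exists c : 'I_n -> nat, v = \sum_i (c i)%:Z *: alphav i.
Lemma Qp0 : Qp 0.
Proof. by exists (fun _ => 0%N); rewrite big1 // => i _; rewrite scale0r. Qed.
Lemma QpD x y : Qp x -> Qp y -> Qp (x + y).
Proof.
move=> [c ->] [d ->]; exists (fun i => c i + d i)%N.
by rewrite -big_split /=; apply: eq_bigr => i _; rewrite PoszD scalerDl.
Qed.
Lemma QpZ (k : nat) x : Qp x -> Qp (k%:Z *: x).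
Proof.
move=> [c ->]; exists (fun i => k * c i)%N.
by rewrite scaler_sumr; apply: eq_bigr => i _; rewrite scalerA PoszM.
Qed.
Lemma Qp_alphav i : Qp (alphav i).
Proof.
exists (fun j => if j == i then 1%N else 0%N).
rewrite (bigD1 i) //= eqxx scale1r big1 ?addr0 // => j /negbTE ->.
by rewrite scale0r.
Qed.

End Basics.


Definition step (a1 a2 P Q : int) (b : bool) (c : int * int) : int * int :=
  if b then (c.1 - (P + 2 * c.1 + a1 * c.2), c.2)
  else (c.1, c.2 - (Q + a2 * c.1 + 2 * c.2)).
Fixpoint H (a1 a2 P Q : int) (b : bool) (k : nat) (c : int * int) : int * int :=
  if k is k'.+1 then H a1 a2 P Q (~~ b) k' (step a1 a2 P Q b c) else c.

Lemma Hpos_inf a1 a2 k b c : 4 <= a1 * a2 -> a1 <= 0 -> a2 <= 0 ->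
  0 <= c.1 -> 0 <= c.2 ->
  (if b then 2 * c.1 <= - a1 * c.2 else 2 * c.2 <= - a2 * c.1) ->
  0 <= (H a1 a2 0 0 b k c).1 /\ 0 <= (H a1 a2 0 0 b k c).2.
Proof.
move=> h4 ha1 ha2; elim: k b c => [|k IH] b [X Y] /= hX hY hb; first by [].
apply: IH; case: b hb => /= hb.
- nia.
- nia.
- nia.
- nia.
- nia.
- nia.
Qed.

Lemma fin_cases (a1 a2 : int) : a1 <= 0 -> a2 <= 0 -> (a1 = 0 <-> a2 = 0) -> a1 * a2 < 4 ->
  [\/ a1 = 0 /\ a2 = 0, a1 = -1 /\ a2 = -1, (a1 = -1 /\ a2 = -2) \/ (a1 = -2 /\ a2 = -1)
     | (a1 = -1 /\ a2 = -3) \/ (a1 = -3 /\ a2 = -1)].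
Proof.
move=> h1 h2 [e1 e2] h4.
have [z|nz] := eqVneq a1 0.
  by constructor 1; split => //; apply: e1.
have nz2 : a2 != 0 by apply/eqP => /e2; apply/eqP.
have b1 : -3 <= a1 by nia.
have b2 : -3 <= a2 by nia.
have : a1 \in [:: -3; -2; -1] by rewrite !inE; lia.
have : a2 \in [:: -3; -2; -1] by rewrite !inE; lia.
rewrite !inE => /or3P[] /eqP e2' /or3P[] /eqP e1'; rewrite e1' e2' in h4 *; try lia.
all: first [ by constructor 4; left | by constructor 4; right | by constructor 3; left
           | by constructor 3; right | by constructor 2 ].
Qed.

Lemma fin_data (a1 a2 : int) :
  [\/ a1 = 0 /\ a2 = 0, a1 = -1 /\ a2 = -1, (a1 = -1 /\ a2 = -2) \/ (a1 = -2 /\ a2 = -1)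
     | (a1 = -1 /\ a2 = -3) \/ (a1 = -3 /\ a2 = -1)] ->
  exists2 mm : nat, (0 < mm)%N &
   (forall P Q, H a1 a2 P Q false mm (0,0) = H a1 a2 P Q true mm (0,0)) /\
   (forall k, (k < mm)%N -> 0 <= (H a1 a2 0 0 false k (1,0)).1 /\ 0 <= (H a1 a2 0 0 false k (1,0)).2).
Proof.
case=> [[-> ->]|[-> ->]|[[-> ->]|[-> ->]]|[[-> ->]|[-> ->]]];
 [exists 2%N|exists 3%N|exists 4%N|exists 4%N|exists 6%N|exists 6%N] => //; split;
 (try by move=> P Q /=; congr (_, _); ring);
 move=> k hk; do 6 (case: k hk => [|k] hk; first by []); by [].
Qed.


Fixpoint altR n (i j : 'I_n) (k : nat) : seq 'I_n :=
  if k is k'.+1 then rcons (altR j i k') i else [::].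

Section Rank2.
Variables (n m : nat) (alpha alphav : 'I_n -> 'rV[int]_m).
Hypothesis h2 : forall i, pair (alpha i) (alphav i) = 2.
Variables s s' : 'I_n.
Hypothesis hss : s != s'.
Local Notation act := (wact alpha alphav).
Local Notation a1 := (pair (alpha s) (alphav s')).
Local Notation a2 := (pair (alpha s') (alphav s)).

Definition sel b := if b then s else s'.
Definition altb b k := altR (sel b) (sel (~~ b)) k.
Definition vec (c : int * int) : 'rV[int]_m := c.1 *: alphav s + c.2 *: alphav s'.

Lemma altbS b k : altb b k.+1 = rcons (altb (~~ b) k) (sel b).
Proof. by rewrite /altb /= negbK. Qed.
Lemma altb0 b : altb b 0 = [::]. Proof. by []. Qed.
Lemma size_altb b k : size (altb b k) = k.
Proof. by elim: k b => // k IH b; rewrite altbS size_rcons IH. Qed.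

Lemma refl_vec b y c :
  refl alpha alphav (sel b) (y + vec c) =
  y + vec (step a1 a2 (pair (alpha s) y) (pair (alpha s') y) b c).
Proof.
case: b; rewrite /refl /vec /step /= !pairD !pairZ !h2; apply/rowP => k; rewrite !mxE; ring.
Qed.

Lemma act_alt b k y c :
  act (altb b k) (y + vec c) =
  y + vec (H a1 a2 (pair (alpha s) y) (pair (alpha s') y) b k c).
Proof.
elim: k b c => [|k IH] b c //=.
by rewrite altbS act_rcons refl_vec IH.
Qed.

Lemma alt_cat b k j : altb b (k + j) = altb (if odd j then ~~ b else b) k ++ altb b j.
Proof.
elim: j b => [|j IH] b; first by rewrite addn0 cats0.
rewrite addnS !altbS IH /= -rcons_cat; congr (rcons (altb _ _ ++ _) _).
by case: (odd j); case: b.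
Qed.

Definition Iw (t : seq 'I_n) := all (fun x => (x == s) || (x == s')) t.
Lemma Iw_altb b k : Iw (altb b k).
Proof.
elim: k b => // k IH b; rewrite altbS /Iw all_rcons; move: (IH (~~ b)); rewrite /Iw => ->; rewrite andbT.
by case: b; rewrite /= eqxx ?orbT.
Qed.
Lemma Iw_cat t u : Iw (t ++ u) = Iw t && Iw u.
Proof. exact: all_cat. Qed.

Lemma alt_shape t : Iw t ->
  (exists b, t = altb b (size t)) \/ exists a bb x, t = a ++ x :: x :: bb.
Proof.
elim/last_ind: t => [|t x IH]; first by left; exists true.
rewrite /Iw all_rcons => /andP[hx ht].
case: (IH ht) => [[b eb]|[a [bb [y ->]]]]; last first.
  by right; exists a, (rcons bb x), y; rewrite rcons_cat.
case ek: (size t) eb => [|k] eb.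
  move: eb; rewrite altb0 => ->; left.
  case/orP: hx => /eqP ->; [exists true| exists false]; by [].
have [xb|xb] := eqVneq x (sel b).
  right; exists (altb (~~ b) k), [::], x.
  by rewrite eb altbS xb -!cats1 -catA.
left; exists (~~ b); rewrite size_rcons ek altbS negbK -eb.
congr rcons.
move: xb; case/orP: hx => /eqP ->; rewrite /sel; case: (b) => //=; by rewrite eqxx.
Qed.

Hypotheses (ha1 : a1 <= 0) (ha2 : a2 <= 0) (hz : a1 = 0 <-> a2 = 0).

Lemma rank2 u : Iw u ->
  (forall u', Iw u' -> eqw alpha alphav u' u -> (size u <= size u')%N) ->
  (forall u', Iw u' -> eqw alpha alphav u' (u ++ [:: s]) -> (size u <= size u')%N) ->
  exists X Y : nat, act u (alphav s) = vec (X%:Z, Y%:Z).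
Proof.
move=> hu hmin hmin2.
case: (alt_shape hu) => [[b eb]|[a [bb [x ex]]]]; last first.
  have hI : Iw (a ++ bb).
    by move: hu; rewrite ex !Iw_cat /Iw /= => /and3P[-> _ /andP[_ ->]].
  have := hmin (a ++ bb) hI.
  have he : eqw alpha alphav (a ++ bb) u.
    by move=> v; rewrite ex !act_cat !act_cons refl_invol.
  move=> /(_ he); rewrite ex !size_cat /= => ?; exfalso; lia.
move: eb; set k := size u => eb.
have ekk : size u = k by [].
case: b eb => eb.
  case: k ekk eb => [|k] ekk eb.
    by exists 1%N, 0%N; rewrite eb /vec /= scale1r scale0r addr0.
  have hI : Iw (altb false k) by apply: Iw_altb.
  have := hmin2 (altb false k) hI.
  have he : eqw alpha alphav (altb false k) (u ++ [:: s]).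
    by move=> v; rewrite eb altbS act_cat act_rcons /= refl_invol.
  move=> /(_ he); rewrite size_altb => ?; exfalso; lia.
have key : act u (alphav s) = vec (H a1 a2 0 0 false k (1%:Z, 0%:Z)).
  have e1 : alphav s = 0 + vec (1, 0) by rewrite /vec /= scale1r scale0r addr0 add0r.
  by rewrite [X in act u X]e1 eb act_alt !pair0 add0r.
suff [p1 p2] : 0 <= (H a1 a2 0 0 false k (1%:Z, 0%:Z)).1 /\ 0 <= (H a1 a2 0 0 false k (1%:Z, 0%:Z)).2.
  by exists `|(H a1 a2 0 0 false k (1%:Z, 0%:Z)).1|%N, `|(H a1 a2 0 0 false k (1%:Z, 0%:Z)).2|%N;
     rewrite key !gez0_abs.
have [h4|h4] := lerP 4 (a1 * a2).
  by apply: Hpos_inf => //=; lia.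
have [mm mm0 [braid pos]] := fin_data (fin_cases ha1 ha2 hz h4).
apply: pos; rewrite ltnNge; apply/negP => hk.
have ek : k = ((k - mm) + mm)%N by rewrite subnK.
set b' := if odd mm then ~~ false else false.
have hI : Iw (altb b' (k - mm) ++ altb false mm.-1) by rewrite Iw_cat !Iw_altb.
have := hmin2 _ hI.
have he : eqw alpha alphav (altb b' (k - mm) ++ altb false mm.-1) (u ++ [:: s]).
  have eu : u = altb b' (k - mm) ++ altb false mm by rewrite eb {1}ek alt_cat.
  move=> v; rewrite eu !act_cat; congr (act _ _).
  have hbr : forall y, act (altb false mm) y = act (altb true mm) y.
    move=> y; have -> : y = y + vec (0, 0) by rewrite /vec /= !scale0r !addr0.
    by rewrite !act_alt braid.
  rewrite hbr; clear hbr; case: mm mm0 {ek b' hI braid eu hk} => // mm _.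
  by rewrite altbS act_rcons /= refl_invol.
move=> /(_ he); rewrite size_cat !size_altb ekk => ?; lia.
Qed.

End Rank2.


Section Pos.
Variables (n m : nat) (A : 'M[int]_n) (alpha alphav : 'I_n -> 'rV[int]_m).
Hypothesis hA : is_GCM A.
Hypothesis hp : forall i j : 'I_n, pair (alpha j) (alphav i) = A i j.
Local Notation act := (wact alpha alphav).
Local Notation len := (len alpha alphav).
Local Notation eqw := (eqw alpha alphav).

Lemma h2 i : pair (alpha i) (alphav i) = 2.
Proof. by rewrite hp; case: hA. Qed.

Lemma hoff s s' : s != s' -> pair (alpha s) (alphav s') <= 0.
Proof. by move=> ne; rewrite hp; case: hA => _ H _; apply: H; rewrite eq_sym. Qed.
Lemma hzero s s' : pair (alpha s) (alphav s') = 0 <-> pair (alpha s') (alphav s) = 0.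
Proof. by rewrite !hp; case: hA => _ _ H; apply: H. Qed.

Lemma eqw_refl s : eqw s s. Proof. by []. Qed.
Lemma eqw_sym s t : eqw s t -> eqw t s. Proof. by move=> e v; rewrite e. Qed.
Lemma eqw_trans s t u : eqw s t -> eqw t u -> eqw s u.
Proof. by move=> e1 e2 v; rewrite e1 e2. Qed.
Lemma eqw_cat s s' t t' : eqw s s' -> eqw t t' -> eqw (s ++ t) (s' ++ t').
Proof. by move=> e1 e2 v; rewrite !act_cat e1 e2. Qed.
Lemma eqw_ii s i t : eqw (s ++ i :: i :: t) (s ++ t).
Proof. by move=> v; rewrite !act_cat /= refl_invol //; apply: h2. Qed.

Lemma len_cat_le a b : (len (a ++ b) <= len a + size b)%N.
Proof.
case: (len_spec alpha alphav a) => t et <-.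
rewrite -size_cat; apply: len_min; apply: eqw_cat => //; exact: eqw_sym.
Qed.

Theorem pos w i : (len w <= len (w ++ [:: i]))%N -> Qp alphav (act w (alphav i)).
Proof.
have [N] := ubnP (len w); elim: N w i => // N IH w i hN hi.
case: (len_spec alpha alphav w) => t et st.
case: (lastP t) et st => [|x s'] et st.
  by rewrite -et /=; apply: Qp_alphav.
rewrite size_rcons in st.
have hx : (len x < len w)%N.
  rewrite -st ltnS; exact: (len_size alpha alphav x).
have ew : eqw w (x ++ [:: s']) by rewrite cats1; apply: eqw_sym.
have hne : i != s'.
  apply/negP => /eqP ei; move: hi; rewrite leqNgt => /negP; apply.
  have e2 : eqw (w ++ [:: i]) x.
    apply: (eqw_trans (t := x ++ [:: s'] ++ [:: i])).
      by rewrite catA; apply: eqw_cat.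
    by rewrite ei; have := eqw_ii x s' [::]; rewrite cats0.
  by rewrite (len_eqw e2).
pose Ap v u := [/\ Iw i s' u, eqw w (v ++ u) & (len v + size u <= len w)%N].
have ex1 : exists k, pb (exists v u, Ap v u /\ len v = k).
  exists (len x); apply/pbP; exists x, [:: s']; split => //; split => //=.
    by rewrite /Iw /= eqxx orbT.
  by rewrite addn1.
case: (ex_minnP ex1) => L0 /pbP [v0 [u0 [hA0 hL0]]] hmin1.
have ex2 : exists k, pb (exists v u, (Ap v u /\ len v = L0) /\ size u = k).
  by exists (size u0); apply/pbP; exists v0, u0.
case: (ex_minnP ex2) => K0 /pbP [v [u [[[hIu hwu hlen] hLv] hKu]]] hmin2.
have hvx : (len v <= len x)%N.
  rewrite hLv; apply: hmin1; apply/pbP; exists x, [:: s']; split => //; split => //=.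
    by rewrite /Iw /= eqxx orbT.
  by rewrite addn1.
have hvN : (len v < N)%N by move: hvx hx hN; lia.
have side j : (j == i) || (j == s') -> (len v <= len (v ++ [:: j]))%N.
  move=> hj; rewrite leqNgt; apply/negP => hlt.
  have : (L0 <= len (v ++ [:: j]))%N.
    apply: hmin1; apply/pbP; exists (v ++ [:: j]), (j :: u); split => //; split.
    - by rewrite /Iw /= hj.
    - apply: (eqw_trans hwu); rewrite -catA /=.
      by apply: eqw_sym; apply: eqw_ii.
    - by rewrite /= addnS -addSn; apply: leq_trans hlen; rewrite leq_add2r.
  by rewrite -hLv leqNgt hlt.
have hi1 : (i == i) || (i == s') by rewrite eqxx.
have hs1 : (s' == i) || (s' == s') by rewrite eqxx orbT.
have Pvi := IH v i hvN (side i hi1).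
have Pvs := IH v s' hvN (side s' hs1).
have hmin_u : forall u', Iw i s' u' -> eqw u' u -> (size u <= size u')%N.
  move=> u' hI e; rewrite leqNgt; apply/negP => hlt.
  have : (K0 <= size u')%N.
    apply: hmin2; apply/pbP; exists v, u'; split => //; split => //.
      split => //; [by apply: (eqw_trans hwu); apply: eqw_cat => //; apply: eqw_sym | by apply: leq_trans hlen; rewrite leq_add2l ltnW].
  by rewrite -hKu leqNgt hlt.
have hmin_u2 : forall u', Iw i s' u' -> eqw u' (u ++ [:: i]) -> (size u <= size u')%N.
  move=> u' hI e; rewrite leqNgt; apply/negP => hlt.
  have e3 : eqw (w ++ [:: i]) (v ++ u').
    apply: (eqw_trans (t := (v ++ u) ++ [:: i])); first by apply: eqw_cat.
    by rewrite -catA; apply: eqw_cat => //; apply: eqw_sym.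
  move: hi; rewrite leqNgt => /negP; apply; rewrite (len_eqw e3).
  apply: leq_ltn_trans (len_cat_le v u') _.
  by apply: leq_trans hlen; rewrite ltn_add2l.
have hne' : s' != i by rewrite eq_sym.
have [X [Y eXY]] := rank2 h2 hne (hoff hne) (hoff hne') (hzero i s') hIu hmin_u hmin_u2.
rewrite hwu act_cat eXY /vec /= actD !actZ.
by apply: QpD; apply: QpZ.
Qed.


End Pos.


Section Dom.
Variables (n m : nat) (A : 'M[int]_n) (alpha alphav : 'I_n -> 'rV[int]_m).
Hypothesis hA : is_GCM A.
Hypothesis hp : forall i j : 'I_n, pair (alpha j) (alphav i) = A i j.
Local Notation act := (wact alpha alphav).
Local Notation len := (len alpha alphav).
Local Notation eqw := (eqw alpha alphav).

Lemma dom lam : (forall i, 0 <= pair (alpha i) lam) ->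
  forall w, Qp alphav (lam - act w lam).
Proof.
move=> hl w; have [N] := ubnP (len w); elim: N w => // N IH w hN.
case: (len_spec alpha alphav w) => t et st.
case: (lastP t) et st => [|x j] et st.
  by rewrite -et /= subrr; apply: Qp0.
rewrite size_rcons in st.
have hx : (len x < len w)%N by rewrite -st ltnS; exact: (len_size alpha alphav x).
have hxj : (len x <= len (x ++ [:: j]))%N.
  rewrite (@len_eqw _ _ alpha alphav (x ++ [:: j]) w); last first.
    by move=> v; rewrite -et cats1.
  exact: ltnW.
have P := pos hA hp hxj.
have hxN : (len x < N)%N by rewrite ltnS in hN; exact: leq_trans hx hN.
rewrite -et act_rcons /refl actB actZ.
have -> : lam - (act x lam - pair (alpha j) lam *: act x (alphav j)) =
          (lam - act x lam) + pair (alpha j) lam *: act x (alphav j)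
  by apply/rowP => k; rewrite !mxE; ring.
apply: QpD; first exact: IH.
by rewrite -(gez0_abs (hl j)); apply: QpZ.
Qed.

End Dom.


Section Free.
Variables (n m : nat) (alphav : 'I_n -> 'rV[int]_m).
Hypothesis hfv : free_family alphav.

Lemma free_eq (x y : 'I_n -> int) :
  \sum_i x i *: alphav i = \sum_i y i *: alphav i -> forall i, x i = y i.
Proof.
move=> e i; apply/eqP; rewrite -subr_eq0; apply/eqP; apply: (hfv (c := fun i => x i - y i)).
rewrite (eq_bigr (fun i => x i *: alphav i - y i *: alphav i)); last by move=> j _; rewrite scalerBl.
by rewrite sumrB e subrr.
Qed.

Lemma Qp_sum (c : 'I_n -> nat) (F : 'I_n -> 'rV[int]_m) :
  (forall i, Qp alphav (F i)) -> Qp alphav (\sum_i (c i)%:Z *: F i).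
Proof.
move=> hF; elim/big_rec: _ => [|i x _ hx]; first exact: Qp0.
by apply: QpD => //; apply: QpZ.
Qed.

Definition cf (z : 'rV[int]_m) : 'I_n -> nat :=
  epsilon (inhabits (fun _ => 0%N)) (fun c => z = \sum_i (c i)%:Z *: alphav i).

Lemma cfP z : Qp alphav z -> z = \sum_i (cf z i)%:Z *: alphav i.
Proof.
move=> h; exact: (epsilon_spec (inhabits (fun _ : 'I_n => 0%N))
  (fun c : 'I_n -> nat => z = \sum_i (c i)%:Z *: alphav i) h).
Qed.

End Free.

Section Fin.
Variables (n m : nat) (A : 'M[int]_n) (alpha alphav : 'I_n -> 'rV[int]_m).
Hypothesis hA : is_GCM A.
Hypothesis hp : forall i j : 'I_n, pair (alpha j) (alphav i) = A i j.
Hypothesis hfv : free_family alphav.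
Local Notation act := (wact alpha alphav).
Local Notation len := (len alpha alphav).
Local Notation eqw := (eqw alpha alphav).

Lemma max_in (L : seq (seq 'I_n)) : L != [::] ->
  exists2 w0, w0 \in L & forall t, t \in L -> (len t <= len w0)%N.
Proof.
elim: L => // x L IH _.
case: L IH => [|y L] IH.
  by exists x; rewrite ?inE // => t; rewrite inE => /eqP ->.
have [w0 w0in hw0] := IH isT.
have [le|lt] := leqP (len x) (len w0).
  exists w0; first by rewrite inE w0in orbT.
  by move=> t; rewrite inE => /orP[/eqP ->|]; [|apply: hw0].
exists x; first by rewrite inE eqxx.
move=> t; rewrite inE => /orP[/eqP ->|/hw0 h] //.
exact: leq_trans h (ltnW lt).
Qed.

Theorem fin_dir (R : nzRingType) :
  Wv_finite alpha alphav ->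
  forall a : 'rV[int]_m -> R,
      almost_finite_supp alphav a -> Wv_invariant alpha alphav a -> finite_supp a.
Proof.
move=> [L hL] a [J hJ] hinv.
have [w0 w0L hw0] : exists2 w0, w0 \in L & forall t, t \in L -> (len t <= len w0)%N.
  apply: max_in; case: (hL [::]) => t tL _; by case: L tL hL.
have hmax : forall s, (len s <= len w0)%N.
  move=> s; case: (hL s) => t tL e.
  by rewrite (@len_eqw _ _ alpha alphav s t) //; apply: hw0.
have neg : forall i, Qp alphav (- act w0 (alphav i)).
  move=> i.
  have hl : (len (w0 ++ [:: i]) <= len ((w0 ++ [:: i]) ++ [:: i]))%N.
    rewrite (@len_eqw _ _ alpha alphav ((w0 ++ [:: i]) ++ [:: i]) w0) ?hmax //.
    move=> v; rewrite -catA act_cat /= refl_invol //; exact: h2 hA hp.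
  have := pos hA hp hl; rewrite act_cat /= refl_alphav ?actN //; exact: h2 hA hp.
have negQ : forall q, Qp alphav q -> Qp alphav (- act w0 q).
  move=> q [c ->]; rewrite act_sum -sumrN.
  under eq_bigr => i _ do rewrite actZ -scalerN.
  by apply: Qp_sum.
pose K := (\max_(mu <- J) \max_(mu' <- J) \max_i cf alphav (mu' - act w0 mu) i)%N.
pose G (mu : 'rV[int]_m) (f : {ffun 'I_n -> 'I_K.+1}) :=
  mu - act (rev w0) (- \sum_i (nat_of_ord (f i))%:Z *: alphav i).
pose S := [seq G mu f | mu <- J, f <- enum {ffun 'I_n -> 'I_K.+1}].
exists S => lam hlam.
have [mu muJ [c hc]] := hJ lam hlam.
have hlam' : a (act w0 lam) != 0 by rewrite hinv.
have [mu' mu'J [c' hc']] := hJ _ hlam'.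
have hq : Qp alphav (- act w0 (mu - lam)) by apply: negQ; exists c.
have [d hd] := hq.
have ez : mu' - act w0 mu = \sum_i ((c' i + d i)%N)%:Z *: alphav i.
  rewrite (eq_bigr (fun i => (c' i)%:Z *: alphav i + (d i)%:Z *: alphav i)); last first.
    by move=> i _; rewrite PoszD scalerDl.
  rewrite big_split /= -hc' -hd actB.
  by apply/rowP => k; rewrite !mxE; ring.
have hz : Qp alphav (mu' - act w0 mu) by rewrite ez; exists (fun i => (c' i + d i)%N).
have ecf := free_eq hfv (etrans (esym (cfP hz)) ez).
have dK : forall i, (d i <= K)%N.
  move=> i; apply: (@leq_trans (cf alphav (mu' - act w0 mu) i)).
    by have := ecf i; move=> [->]; apply: leq_addl.
  apply: leq_trans (leq_bigmax_seq _ muJ isT).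
  apply: leq_trans (leq_bigmax_seq _ mu'J isT).
  exact: leq_bigmax.
pose f := [ffun i => (inord (d i) : 'I_K.+1)].
have -> : lam = G mu f.
  rewrite /G; under eq_bigr => i _ do rewrite ffunE inordK ?ltnS ?dK //.
  rewrite -hd opprK act_rev; last exact: h2 hA hp.
  by apply/rowP => k; rewrite !mxE; ring.
by apply: allpairs_f => //; rewrite mem_enum.
Qed.

End Fin.


Lemma clear_den p (v : 'I_p -> rat) :
  exists2 D : int, 0 < D & exists z : 'I_p -> int, forall k, (z k)%:~R = D%:~R * v k.
Proof.
exists (\prod_k denq (v k)); first by apply: prodr_gt0 => k _; apply: denq_gt0.
exists (fun k => numq (v k) * \prod_(j | j != k) denq (v j)) => k.
rewrite intrM numqE !rmorph_prod [X in _ = X * _](bigD1 k) //=.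
ring.
Qed.

Section Rho.
Variables (n m : nat) (alpha : 'I_n -> 'rV[int]_m).
Hypothesis hfa : free_family alpha.

Definition Ma : 'M[rat]_(n, m) := \matrix_(i, k) (alpha i 0 k)%:~R.

Lemma Ma_free : row_free Ma.
Proof.
apply: inj_row_free => v hv.
have [D D0 [z hz]] := clear_den (fun i => v 0 i).
have hz0 : \sum_i z i *: alpha i = 0.
  apply/rowP => k; rewrite mxE summxE; apply: (@intr_inj rat).
  rewrite rmorph_sum /=.
  under eq_bigr => i _ do rewrite mxE intrM hz.
  have := congr1 (fun M : 'rV[rat]_m => D%:~R * M 0 k) hv.
  rewrite /= !mxE mulr0 mulr_sumr => h.
  rewrite mulr0z -[X in _ = X]h; apply: eq_bigr => i _; rewrite mxE; ring.
have := hfa hz0 => hz1.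
apply/rowP => i; rewrite mxE.
have := hz i; rewrite hz1 => /esym /eqP; rewrite mulf_eq0 intr_eq0 (gt_eqF D0) /=.
by move/eqP.
Qed.

Lemma exists_rho : exists rho : 'rV[int]_m, forall i, 1 <= pair (alpha i) rho.
Proof.
have /row_freeP [B hB] := Ma_free.
pose rq : 'cV[rat]_m := B *m const_mx 1.
have hrq : Ma *m rq = const_mx 1 by rewrite /rq mulmxA hB mul1mx.
have [D D0 [z hz]] := clear_den (fun k => rq k 0).
exists (\row_k z k) => i.
have e : (pair (alpha i) (\row_k z k))%:~R = (D%:~R : rat).
  rewrite /pair rmorph_sum /=.
  under eq_bigr => k _ do rewrite mxE intrM hz.
  have := congr1 (fun M : 'cV[rat]_n => D%:~R * M i 0) hrq.
  rewrite /= !mxE mulr1 mulr_sumr => h.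
  rewrite -[X in _ = X]h; apply: eq_bigr => k _; rewrite !mxE; ring.
have -> : pair (alpha i) (\row_k z k) = D by apply: (@intr_inj rat).
by [].
Qed.

End Rho.


Lemma fun_choice (X Y : Type) (y0 : Y) (P : X -> Y -> Prop) :
  (forall x, exists y, P x y) -> exists f : X -> Y, forall x, P x (f x).
Proof.
move=> h; exists (fun x => epsilon (inhabits y0) (P x)) => x.
exact: epsilon_spec (h x).
Qed.

Section Inf.
Variables (n m : nat) (A : 'M[int]_n) (alpha alphav : 'I_n -> 'rV[int]_m).
Hypothesis hA : is_GCM A.
Hypothesis hp : forall i j : 'I_n, pair (alpha j) (alphav i) = A i j.
Hypothesis hfa : free_family alpha.
Local Notation act := (wact alpha alphav).

Variable R : nzRingType.
Hypothesis Pr : forall a : 'rV[int]_m -> R,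
      almost_finite_supp alphav a -> Wv_invariant alpha alphav a -> finite_supp a.

Lemma orbit_fin lam : (forall i, 0 <= pair (alpha i) lam) ->
  exists S : seq 'rV[int]_m, forall s, act s lam \in S.
Proof.
move=> hl.
pose a := fun mu : 'rV[int]_m => if pb (exists s, mu = act s lam) then (1 : R) else 0.
have [S hS] : finite_supp a.
  apply: Pr.
- exists [:: lam] => mu; rewrite /a; case: pbP => [[s ->] _|]; last by rewrite eqxx.
  by exists lam; rewrite ?inE //; exact: (dom hA hp hl s).
- move=> s mu; rewrite /a; case: pbP => [[t et]|nt]; case: pbP => [[t' et']|nt'] //.
    by case: nt'; exists (rev s ++ t); rewrite act_cat -et act_rev //; exact: h2 hA hp.
  by case: nt; exists (s ++ t'); rewrite act_cat et'.
- exists S => s; apply: hS; rewrite /a; case: pbP => [_|[]]; first exact: oner_neq0.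
  by exists s.
Qed.

Lemma pair_delta (x : 'rV[int]_m) k : pair x (delta_mx 0 k) = x 0 k.
Proof.
rewrite /pair (bigD1 k) //= mxE !eqxx mulr1 big1 ?addr0 // => j /negbTE nj.
by rewrite mxE nj andbF mulr0.
Qed.

Lemma inf_dir : Wv_finite alpha alphav.
Proof.
have [rho hrho] := exists_rho hfa.
pose M (k : 'I_m) : int := \sum_i `|alpha i 0 k|.
pose lamv (o : option 'I_m) : 'rV[int]_m :=
  if o is Some k then delta_mx 0 k + M k *: rho else rho.
have hdom : forall o i, 0 <= pair (alpha i) (lamv o).
  move=> [k|] i /=; last by apply: le_trans (hrho i).
  rewrite pairD pairZ pair_delta.
  have h1 : `|alpha i 0 k| <= M k.
    rewrite /M (bigD1 i) //= lerDl; apply: sumr_ge0 => j _; exact: normr_ge0.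
  have h3 := hrho i.
  have h4 : - `|alpha i 0 k| <= alpha i 0 k by lia.
  have h5 : 0 <= `|alpha i 0 k| by exact: normr_ge0.
  nia.
have hfin : forall o, exists S : seq 'rV[int]_m, forall s, act s (lamv o) \in S.
  move=> o; exact: (orbit_fin (hdom o)).
have [F hF] := fun_choice [::] hfin.
pose SS := flatten [seq F o | o <- enum {: option 'I_m}].
have inS : forall s o, act s (lamv o) \in SS.
  by move=> s o; apply/flatten_mapP; exists o; rewrite ?mem_enum.
pose pickw (g : {ffun option 'I_m -> 'I_(size SS)}) :=
  epsilon (inhabits [::]) (fun t => forall o, act t (lamv o) = nth 0 SS (g o)).
exists [seq pickw g | g <- enum {ffun option 'I_m -> 'I_(size SS)}] => s.
have ltnidx : forall o, (index (act s (lamv o)) SS < size SS)%N.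
  by move=> o; rewrite index_mem.
pose g := [ffun o => Ordinal (ltnidx o)].
exists (pickw g); first by apply: map_f; rewrite mem_enum.
have hpick : forall o, act (pickw g) (lamv o) = act s (lamv o).
  move=> o.
  have := epsilon_spec (inhabits [::])
    (fun t => forall o, act t (lamv o) = nth 0 SS (g o)).
  move=> /(_ _) ->; first by rewrite ffunE /= nth_index.
  by exists s => o'; rewrite ffunE /= nth_index.
move=> v; rewrite (row_sum_delta v) !act_sum; apply: eq_bigr => k _; rewrite !actZ.
have -> : delta_mx 0 k = lamv (Some k) - M k *: lamv None by rewrite /= addrK.
by rewrite !actB !actZ !hpick.
Qed.

End Inf.

Theorem mainTheorem14 (R : comNzRingType) (n m : nat) (A : 'M[int]_n)
  (alpha alphav : 'I_n -> 'rV[int]_m) :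
  is_GCM A ->
  free_family alpha -> free_family alphav ->
  (forall i j : 'I_n, pair (alpha j) (alphav i) = A i j) ->
  ((forall a : 'rV[int]_m -> R,
      almost_finite_supp alphav a -> Wv_invariant alpha alphav a ->
      finite_supp a)
   <-> Wv_finite alpha alphav).
Proof.
move=> hA hfa hfv hp; split.
  by move=> Pr; exact: (inf_dir hA hp hfa Pr).
by move=> hW a; exact: (fin_dir hA hp hfv hW).
Qed.
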